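(* Let $F:(0,\infty)\to(0,\infty)$ be strictly decreasing and let $(x_n)_{n\in\mathbb Z}$ be an equilibrium configuration for $F$. Suppose that some gap is maximal, i.e. there is $k\in\mathbb Z$ with $x_{k+1}-x_k\ge x_{m+1}-x_m$ for all $m\in\mathbb Z$, or that some gap is minimal, i.e. there is $k$ with $x_{k+1}-x_k\le x_{m+1}-x_m$ for all $m\in\mathbb Z$. Then the configuration is trivial, i.e. $x_{n+1}-x_n$ is independent of $n$.
   Context: A force law is a strictly decreasing function $F:(0,\infty)\to(0,\infty)$; two particles at distance $d$ repel each other with force of magnitude $F(d)$. A configuration is a strictly increasing bi-infinite sequence $(x_n)_{n\in\mathbb Z}$ of reals (particle positions). The particle at $x_n$ is in equilibrium if the force from the left $\sum_{m<n}F(x_n-x_m)$ and the force from the right $\sum_{m>n}F(x_m-x_n)$ are both finite and equal. An equilibrium configuration is a configuration in which every particle is in equilibrium. It is trivial if it is an arithmetic progression, i.e. $x_{n+1}-x_n$ is constant. The numbers $x_{n+1}-x_n$ are called gaps. *)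

(* Defs.v *)
From Stdlib Require Import Reals ZArith.
Open Scope R_scope.

(* A force law: F : (0,oo) -> (0,oo) strictly decreasing.  F is a total
   function R -> R; only its values on (0,oo) matter. *)
Definition force_law (F : R -> R) : Prop :=
  (forall d, 0 < d -> 0 < F d) /\
  (forall d e, 0 < d -> d < e -> F e < F d).

Definition configuration (x : Z -> R) : Prop :=
  forall n : Z, x n < x (n + 1)%Z.

(* Force from the left on particle n: sum_{m<n} F(x n - x m)
   = sum_{j>=1} F(x n - x (n-j)); all terms positive, so the order of
   summation is irrelevant.  Similarly from the right. *)
Definition left_term (F : R -> R) (x : Z -> R) (n : Z) (j : nat) : R :=
  F (x n - x (n - Z.of_nat (S j))%Z).
Definition right_term (F : R -> R) (x : Z -> R) (n : Z) (j : nat) : R :=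
  F (x (n + Z.of_nat (S j))%Z - x n).

Definition in_equilibrium (F : R -> R) (x : Z -> R) (n : Z) : Prop :=
  exists L : R, infinite_sum (left_term F x n) L /\
                infinite_sum (right_term F x n) L.

Definition equilibrium_configuration (F : R -> R) (x : Z -> R) : Prop :=
  configuration x /\ forall n : Z, in_equilibrium F x n.

Definition gap (x : Z -> R) (n : Z) : R := x (n + 1)%Z - x n.

Definition trivial_configuration (x : Z -> R) : Prop :=
  forall n m : Z, gap x n = gap x m.

(* Main.v *)
Require Import Defs.
From Stdlib Require Import Reals ZArith Lra Lia.
Open Scope R_scope.

Lemma isum_cv f l : infinite_sum f l -> Un_cv (sum_f_R0 f) l.
Proof. unfold infinite_sum, Un_cv. auto. Qed.

Lemma sum_le a b A B : infinite_sum a A -> infinite_sum b B ->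
  (forall j, a j <= b j) -> A <= B.
Proof.
  intros Ha Hb H. apply isum_cv in Ha. apply isum_cv in Hb.
  eapply Rle_cv_lim; [|exact Ha|exact Hb].
  intro n. apply sum_Rle. intros; auto.
Qed.

Lemma cv_ge u l c i : Un_cv u l -> (forall n, (n >= i)%nat -> c <= u n) -> c <= l.
Proof.
  intros Hu H. destruct (Rle_lt_dec c l) as [h|h]; auto.
  destruct (Hu (c - l)) as [N HN]; [lra|].
  specialize (HN (max N i) ltac:(lia)). specialize (H (max N i) ltac:(lia)).
  unfold R_dist in HN. apply Rabs_def2 in HN. lra.
Qed.

Lemma psum_ge d i : (forall j, 0 <= d j) -> forall n, (n >= i)%nat -> d i <= sum_f_R0 d n.
Proof.
  intros Hd n. induction n; intros Hn.
  - assert (i = 0%nat) by lia. subst. simpl. lra.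
  - destruct (Nat.eq_dec i (S n)) as [e|e].
    + subst. simpl. assert (0 <= sum_f_R0 d n) by (apply cond_pos_sum; auto). lra.
    + simpl. specialize (IHn ltac:(lia)). specialize (Hd (S n)). lra.
Qed.

Lemma sum_eq a b A B : infinite_sum a A -> infinite_sum b B ->
  (forall j, a j <= b j) -> B <= A -> forall j, a j = b j.
Proof.
  intros Ha Hb H HBA j.
  apply isum_cv in Ha. apply isum_cv in Hb.
  assert (Hc : Un_cv (fun n => sum_f_R0 b n - sum_f_R0 a n) (B - A)) by (apply CV_minus; auto).
  assert (b j - a j <= B - A).
  { apply (cv_ge _ _ _ j Hc). intros n Hn.
    rewrite <- minus_sum. apply (psum_ge (fun k => b k - a k)); auto.
    intro k. specialize (H k). lra. }
  specialize (H j). lra.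
Qed.

Lemma incr x : configuration x -> forall n (j : nat), x n < x (n + Z.of_nat (S j))%Z.
Proof.
  intros Hx n j. induction j.
  - simpl. replace (n + 1)%Z with (n + 1)%Z by lia. apply Hx.
  - eapply Rlt_trans; [exact IHj|].
    replace (n + Z.of_nat (S (S j)))%Z with (n + Z.of_nat (S j) + 1)%Z by lia. apply Hx.
Qed.

Lemma F_inj F d e : force_law F -> 0 < d -> 0 < e -> F d = F e -> d = e.
Proof.
  intros [_ HF] hd he H. destruct (Rtotal_order d e) as [h|[h|h]]; auto.
  - specialize (HF d e hd h). lra.
  - specialize (HF e d he h). lra.
Qed.

Lemma all_gaps x k : (forall j : nat, gap x (k + Z.of_nat (S j))%Z = gap x k) ->
  (forall j : nat, gap x (k - Z.of_nat (S j))%Z = gap x k) -> trivial_configuration x.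
Proof.
  intros H1 H2.
  assert (forall n, gap x n = gap x k).
  { intro n. destruct (Z.lt_trichotomy n k) as [h|[h|h]].
    - specialize (H2 (Z.to_nat (k - n - 1))).
      replace (k - Z.of_nat (S (Z.to_nat (k - n - 1))))%Z with n in H2 by lia. auto.
    - subst; auto.
    - specialize (H1 (Z.to_nat (n - k - 1))).
      replace (k + Z.of_nat (S (Z.to_nat (n - k - 1))))%Z with n in H1 by lia. auto. }
  intros n m. rewrite !H. auto.
Qed.

Theorem mainTheorem1 (F : R -> R) (x : Z -> R) :
  force_law F ->
  equilibrium_configuration F x ->
  ((exists k : Z, forall m : Z, gap x m <= gap x k) \/
   (exists k : Z, forall m : Z, gap x k <= gap x m)) ->
  trivial_configuration x.
Proof.
  intros HF [Hc He] Hk.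
  pose proof HF as [HFp HFd].
  assert (Fle : forall d e, 0 < d -> d <= e -> F e <= F d).
  { intros d e hd h. destruct (Req_dec d e) as [->|n]; [lra|]. left. apply HFd; lra. }
  assert (Hp : forall n j, 0 < x (n + Z.of_nat (S j))%Z - x n).
  { intros n j. pose proof (incr x Hc n j). lra. }
  assert (Hm : forall n j, 0 < x n - x (n - Z.of_nat (S j))%Z).
  { intros n j. pose proof (incr x Hc (n - Z.of_nat (S j)) j).
    replace (n - Z.of_nat (S j) + Z.of_nat (S j))%Z with n in H by lia. lra. }
  assert (DR : forall k j, x (k + 1 + Z.of_nat (S j))%Z - x (k + 1)%Z =
     (x (k + Z.of_nat (S j))%Z - x k) + gap x (k + Z.of_nat (S j))%Z - gap x k).
  { intros k j. unfold gap.
    replace (k + 1 + Z.of_nat (S j))%Z with (k + Z.of_nat (S j) + 1)%Z by lia. lra. }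
  assert (DL : forall k j, x (k + 1)%Z - x (k + 1 - Z.of_nat (S j))%Z =
     (x k - x (k - Z.of_nat (S j))%Z) + gap x k - gap x (k - Z.of_nat (S j))%Z).
  { intros k j. unfold gap.
    replace (k + 1 - Z.of_nat (S j))%Z with (k - Z.of_nat (S j) + 1)%Z by lia. lra. }
  destruct Hk as [[k Hk]|[k Hk]];
  destruct (He k) as [A [HLA HRA]]; destruct (He (k + 1)%Z) as [B [HLB HRB]].
  -
    assert (T1 : forall j, right_term F x k j <= right_term F x (k+1) j).
    { intro j. unfold right_term. apply Fle. apply Hp. rewrite DR. specialize (Hk (k + Z.of_nat (S j))%Z). lra. }
    assert (T2 : forall j, left_term F x (k+1) j <= left_term F x k j).
    { intro j. unfold left_term. apply Fle. apply Hm. rewrite DL. specialize (Hk (k - Z.of_nat (S j))%Z). lra. }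
    pose proof (sum_le _ _ _ _ HRA HRB T1). pose proof (sum_le _ _ _ _ HLB HLA T2).
    apply (all_gaps x k).
    + intro j. pose proof (sum_eq _ _ _ _ HRA HRB T1 ltac:(lra) j) as E.
      unfold right_term in E. apply F_inj in E; auto. rewrite DR in E. lra.
    + intro j. pose proof (sum_eq _ _ _ _ HLB HLA T2 ltac:(lra) j) as E.
      unfold left_term in E. apply F_inj in E; auto. rewrite DL in E. lra.
  - assert (T1 : forall j, right_term F x (k+1) j <= right_term F x k j).
    { intro j. unfold right_term. apply Fle. apply Hp. rewrite DR. specialize (Hk (k + Z.of_nat (S j))%Z). lra. }
    assert (T2 : forall j, left_term F x k j <= left_term F x (k+1) j).
    { intro j. unfold left_term. apply Fle. apply Hm. rewrite DL. specialize (Hk (k - Z.of_nat (S j))%Z). lra. }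
    pose proof (sum_le _ _ _ _ HRB HRA T1). pose proof (sum_le _ _ _ _ HLA HLB T2).
    apply (all_gaps x k).
    + intro j. pose proof (sum_eq _ _ _ _ HRB HRA T1 ltac:(lra) j) as E.
      unfold right_term in E. apply F_inj in E; auto. rewrite DR in E. lra.
    + intro j. pose proof (sum_eq _ _ _ _ HLA HLB T2 ltac:(lra) j) as E.
      unfold left_term in E. apply F_inj in E; auto. rewrite DL in E. lra.
Qed.
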